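(* Let $Q>0$ and let $\gamma_+$ be the larger root of $\gamma-\log\gamma=Q+1$. For $x>0$ let $w_{ex}(t)=\frac{x}{\gamma_+}t^{\frac{1-\gamma_+}{\gamma_+}}$ on $I=[0,1]$. Then $[w_{ex}]_{RH_1,[0,1]}\le Q$; for every $0<\varepsilon<\frac{1}{\gamma_+-1}$, $$\langle w_{ex}^{1+\varepsilon}\rangle_I=B\big(\langle w_{ex}\rangle_I,\langle w_{ex}\log w_{ex}\rangle_I\big),$$ where $B(x,y)=\frac{v^{\varepsilon}}{1+\varepsilon-\gamma_+\varepsilon}\big(x(1+\varepsilon)-\varepsilon\gamma_+v\big)$ with $v=v(x,y)$ determined by $y=(\log v+\gamma_+)x-v\gamma_+$, $v\le x\le\gamma_+ v$; and finally $\langle w_{ex}^{1+\frac{1}{\gamma_+-1}}\rangle_I=\infty$.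
   Context: $\langle f\rangle_J=\frac1{|J|}\int_J f$. For a weight $w$ on $[0,1]$, $[w]_{RH_1,[0,1]}=\sup_{J\subset[0,1]}\Big\langle \frac{w}{\langle w\rangle_J}\log\frac{w}{\langle w\rangle_J}\Big\rangle_J$, supremum over subintervals $J$. *)

(* Defs.v *)
From HB Require Import structures.
From mathcomp Require Import all_boot all_order all_algebra.
From mathcomp Require Import all_classical all_reals all_analysis.
Set Implicit Arguments. Unset Strict Implicit. Unset Printing Implicit Defensive.
Import Order.TTheory GRing.Theory Num.Theory.
Import numFieldNormedType.Exports.
Local Open Scope classical_set_scope.
Local Open Scope ring_scope.

Definition avg {R : realType} (a b : R) (f : R -> R) : \bar R :=
  (((b - a)^-1)%:E * \int[lebesgue_measure]_(t in `[a, b]) (f t)%:E)%E.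

(* [w]_{RH_1,[0,1]} = sup over subintervals J=[a,b] of [0,1] (a<b) of
   < (w/<w>_J) log (w/<w>_J) >_J  (for a locally integrable weight, <w>_J is finite) *)
Definition RH1_const01 {R : realType} (w : R -> R) : \bar R :=
  ereal_sup [set y : \bar R | exists a b : R, [/\ 0 <= a, a < b, b <= 1 &
     y = avg a b (fun t => (w t / fine (avg a b w)) * ln (w t / fine (avg a b w)))]].

Definition w_ex {R : realType} (x gamma : R) (t : R) : R :=
  x / gamma * t `^ ((1 - gamma) / gamma).

Definition Bfun {R : realType} (gamma eps x v : R) : R :=
  v `^ eps / (1 + eps - gamma * eps) * (x * (1 + eps) - eps * gamma * v).

Definition vcond {R : realType} (gamma x y v : R) : Prop :=
  0 < v /\ y = (ln v + gamma) * x - v * gamma /\ v <= x /\ x <= gamma * v.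

(* Main.v *)
Require Import Defs.
From HB Require Import structures.
From mathcomp Require Import all_boot all_order all_algebra.
From mathcomp Require Import all_classical all_reals all_analysis.
From mathcomp Require Import measurable_realfun.
From mathcomp Require Import ring lra.
Import Order.TTheory GRing.Theory Num.Theory.
Import numFieldNormedType.Exports.
Local Open Scope classical_set_scope.
Local Open Scope ring_scope.

Section S.
Context {R : realType}.
Notation mu := (@lebesgue_measure R).

Lemma FTCp (f F : R -> R) (a b : R) : 0 < a -> a < b ->
  (forall t : R, 0 < t -> {for t, continuous f}) ->
  (forall t : R, 0 < t -> is_derive t 1 F (f t)) ->
  (\int[mu]_(t in `[a, b]) (f t)%:E = (F b - F a)%:E)%E.
Proof.
move=> a0 ab cf dF.
have Fc t : 0 < t -> {for t, continuous F}.
  move=> t0; apply/differentiable_continuous/derivable1_diffP.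
  by have [] := dF t t0.
rewrite EFinB; apply: continuous_FTC2 => //.
- apply: continuous_in_subspaceT => t; rewrite inE /= in_itv /= => /andP[hat _].
  by apply: cf; exact: lt_le_trans a0 hat.
- split.
  + move=> t; rewrite in_itv /= => /andP[hat _].
    by have [] := dF t (lt_trans a0 hat).
  + by apply: cvg_at_right_filter; apply: Fc.
  + by apply: cvg_at_left_filter; apply: Fc; exact: lt_trans a0 ab.
- move=> t; rewrite in_itv /= => /andP[hat _].
  by rewrite derive1E; have [_ ->] := dF t (lt_trans a0 hat).
Qed.

Lemma FTC0 (f F : R -> R) (b : R) : 0 < b ->
  (forall t : R, 0 < t -> {for t, continuous f}) ->
  (forall t : R, 0 < t -> is_derive t 1 F (f t)) ->
  F x @[x --> 0^'+] --> F 0 ->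
  ((forall t, 0 < t <= b -> 0 <= f t) \/ (forall t, 0 < t <= b -> f t <= 0)) ->
  (\int[mu]_(t in `[0%R, b]) (f t)%:E = (F b - F 0)%:E)%E.
Proof.
move=> b0 cf dF F0 sgn.
pose e (n : nat) := b / 2 * harmonic n.
have e0 n : 0 < e n by rewrite /e mulr_gt0 ?divr_gt0 ?harmonic_gt0.
have eb n : e n < b.
  have h1 : harmonic n <= 1 :> R.
    by rewrite /= invf_le1 ?ler1n ?ltr0n.
  have h2 : b / 2 * harmonic n <= b / 2.
    by rewrite ler_piMr // divr_ge0 // ltW.
  rewrite /e; lra.
pose S (n : nat) : set R := [set` `[e n, b]].
have nd : nondecreasing_seq S.
  move=> m n mn; rewrite /S subsetEset; apply: subset_itvr; rewrite bnd_simp.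
  rewrite /e ler_pM2l ?divr_gt0 // /harmonic /= lef_pV2 ?posrE ?ltr0n // ler_nat.
  by [].
have US : \bigcup_i S i = `]0%R, b]%classic.
  apply/seteqP; split => y /=.
    move=> [i _]; rewrite /S /= !in_itv /= => /andP[ey yb].
    by rewrite yb andbT (lt_le_trans (e0 i) ey).
  rewrite in_itv /= => /andP[y0 yb].
  pose N := (Num.truncn (b / 2 / y)).+1.
  exists (Num.truncn (b / 2 / y)) => //; rewrite /S /= in_itv /= yb andbT.
  have := truncnS_gt (b / 2 / y); rewrite ltr_pdivrMr // => hN.
  rewrite /e /harmonic /= ler_pdivrMr ?ltr0n //.
  by rewrite [y * _]mulrC ltW.
have mf : measurable_fun (`]0%R, +oo[ : set R) f.
  apply: open_continuous_measurable_fun; first exact: interval_open.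
  by move=> t; rewrite inE /= in_itv /= andbT; exact: cf.
have mfS (D : set R) : D `<=` (`]0%R, +oo[ : set R) -> measurable_fun D (EFin \o f).
  by move=> DS; apply/measurable_EFinP; exact: measurable_funS mf.
have mS n : measurable (S n) by exact: measurable_itv.
have SS n : S n `<=` (`]0%R, +oo[ : set R).
  move=> y; rewrite /S /= !in_itv /= andbT => /andP[ey _].
  exact: lt_le_trans (e0 n) ey.
have key : (\int[mu]_(x in S i) (f x)%:E)%E @[i --> \oo] -->
    (\int[mu]_(x in `]0%R, b]) (f x)%:E)%E.
  rewrite -US; case: sgn => h.
  - apply: ge0_nondecreasing_set_cvg_integral => // [i|i y]; first exact: mfS.
    rewrite /S /= in_itv /= => /andP[ey yb]; rewrite lee_fin h //.
    by rewrite yb (lt_le_trans (e0 i) ey).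
  - apply: le0_nondecreasing_set_cvg_integral => // [i|i y]; first exact: mfS.
    rewrite /S /= in_itv /= => /andP[ey yb]; rewrite lee_fin h //.
    by rewrite yb (lt_le_trans (e0 i) ey).
have eqS n : (\int[mu]_(x in S n) (f x)%:E)%E = (F b - F (e n))%:E.
  exact: FTCp (e0 n) (eb n) cf dF.
have ecvg : e n @[n --> \oo] --> 0.
  rewrite (_ : 0 = b / 2 * 0); last by rewrite mulr0.
  exact: cvgMl_tmp cvg_harmonic.
have lim2 : (F b - F (e n))%:E @[n --> \oo] --> (F b - F 0)%:E.
  apply/fine_cvgP; split; first by near=> n.
  apply: cvgB; first exact: cvg_cst.
  by move/cvg_at_rightP: F0 => /(_ e); apply; split.
rewrite -integral_itv_obnd_cbnd; last first.
  apply: mfS => y; rewrite /= !in_itv /= andbT => /andP[]//.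
rewrite (_ : (fun i => _) = (fun n => (F b - F (e n))%:E)) in key; last first.
  by apply: funext => n; exact: eqS.
exact: (cvg_unique _ key lim2).
Unshelve. all: by end_near.
Qed.
End S.

Section S2.
Context {R : realType}.
Notation mu := (@lebesgue_measure R).

Lemma der_cont (f : R -> R) (t df : R) : is_derive t 1 f df -> {for t, continuous f}.
Proof. by move=> [h _]; apply/differentiable_continuous/derivable1_diffP. Qed.

Lemma der_pow (r t : R) : 0 < t -> r != 0 ->
  is_derive t 1 (fun u => r^-1 * u `^ r) (t `^ (r - 1)).
Proof.
move=> t0 r0.
apply: is_derive_eq; first exact: (is_deriveZ (r^-1) (is_derive1_powR r t0)).
by rewrite /GRing.scale /= mulrA mulVf // mul1r.
Qed.

Lemma int_pow (q a b : R) : -1 < q -> 0 <= a -> a < b ->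
  (\int[mu]_(t in `[a, b]) (t `^ q)%:E = ((b `^ (q+1) - a `^ (q+1)) / (q+1))%:E)%E.
Proof.
move=> q1 a0 ab.
have r0 : q + 1 != 0 by rewrite lt0r_neq0 //; lra.
have dF (t : R) : 0 < t -> is_derive t 1 (fun u => (q+1)^-1 * u `^ (q+1)) (t `^ q).
  by move=> t0; have := (@der_pow (q+1) t t0 r0); rewrite addrK.
have cf (t : R) : 0 < t -> {for t, continuous (fun u : R => u `^ q)}.
  move=> t0; apply: (@der_cont _ _ (q * t `^ (q - 1))).
  exact: is_derive1_powR.
rewrite (_ : (b `^ (q+1) - a `^ (q+1)) / (q+1) =
   (q+1)^-1 * b `^ (q+1) - (q+1)^-1 * a `^ (q+1)); last by rewrite mulrC mulrBr.
move: a0 ab; rewrite le_eqVlt => /predU1P[<- ab|a0 ab]; last exact: FTCp.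
apply: FTC0 => //.
- rewrite powR0 // mulr0.
  rewrite -[X in _ --> X](mulr0 ((q+1)^-1)).
  by apply: cvgMl_tmp; apply: powR_cvg0; lra.
- by left => t _; exact: powR_ge0.
Qed.

Lemma powln0 (r : R) : 0 < r -> x `^ r * ln x @[x --> 0^'+] --> 0.
Proof.
move=> r0.
apply: (@squeeze_cvgr _ _ _ _ (fun x => - (2 / r) * x `^ (r / 2)) (fun=> 0)); last 2 first.
- rewrite -[X in _ --> X](mulr0 (- (2 / r))).
  by apply: cvgMl_tmp; apply: powR_cvg0; rewrite divr_gt0.
- exact: cvg_cst.
near=> x.
have x0 : 0 < x by near: x; exact: nbhs_right_gt.
have x1 : x < 1 by near: x; exact: nbhs_right_lt.
have P0 : 0 <= x `^ r by exact: powR_ge0.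
apply/andP; split; last by rewrite mulr_ge0_le0 // ln_le0 // ltW.
set y := x `^ (- (r / 2)).
have y0 : 0 < y by exact: powR_gt0.
have lny : ln y = - (r / 2) * ln x by rewrite ln_powR.
have lnyy : ln y <= y by exact/ltW/ln_sublinear.
have Py : x `^ r * y = x `^ (r / 2).
  rewrite /y -powRD; last by rewrite (gt_eqF x0) implybT.
  by congr (_ `^ _); field.
have lnx : ln x = - (2 / r) * ln y.
  rewrite lny; field; exact: lt0r_neq0.
rewrite -Py lnx.
have h2 : 0 <= 2 / r by rewrite divr_ge0 // ltW.
have hcp : 0 <= 2 / r * x `^ r by exact: mulr_ge0.
nra.
Unshelve. all: by end_near.
Qed.

Definition Gpl (r u : R) := r^-1 * (u `^ r * ln u) - r^-1 * (r^-1 * u `^ r).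

Lemma der_Gpl (q t : R) : 0 < t -> q + 1 != 0 ->
  is_derive t 1 (Gpl (q + 1)) (t `^ q * ln t).
Proof.
move=> t0 r0.
rewrite (_ : Gpl (q + 1) = ((q+1)^-1 \*: ((fun u : R => u `^ (q+1)) * (@ln R))) -
   ((q+1)^-1 \*: (fun u : R => (q+1)^-1 * u `^ (q+1)))); last first.
  by apply: funext => u; rewrite /Gpl !fctE.
apply: is_derive_eq.
  exact: (is_deriveB (is_deriveZ ((q+1)^-1)
     (is_deriveM (is_derive1_powR (q+1) t0) (is_derive1_ln t0)))
     (is_deriveZ ((q+1)^-1) (@der_pow (q+1) t t0 r0))).
rewrite /GRing.scale /= addrK.
have -> : t `^ (q + 1) = t `^ q * t.
  by rewrite powRD ?powRr1 ?ltW // (gt_eqF t0) implybT.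
field; rewrite (gt_eqF t0) r0 //.
Qed.

Lemma int_powln (q a b : R) : -1 < q -> 0 <= a -> a < b -> b <= 1 ->
  (\int[mu]_(t in `[a, b]) (t `^ q * ln t)%:E =
     (Gpl (q + 1) b - Gpl (q + 1) a)%:E)%E.
Proof.
move=> q1 a0 ab b1.
have r0 : q + 1 != 0 by rewrite lt0r_neq0 //; lra.
have dF (t : R) : 0 < t -> is_derive t 1 (Gpl (q + 1)) (t `^ q * ln t).
  by move=> t0; exact: der_Gpl.
have cf (t : R) : 0 < t -> {for t, continuous (fun u : R => u `^ q * ln u)}.
  move=> t0; apply: der_cont.
  exact: (is_deriveM (is_derive1_powR q t0) (is_derive1_ln t0)).
move: a0 ab; rewrite le_eqVlt => /predU1P[<- ab|a0 ab]; last exact: FTCp.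
apply: FTC0 => //.
- have -> : Gpl (q + 1) 0 = 0.
    by rewrite /Gpl powR0 // mul0r !mulr0 subr0.
  rewrite -[X in _ --> X](subr0 0).
  apply: cvgB.
    rewrite -[X in _ --> X](mulr0 ((q+1)^-1)).
    by apply: cvgMl_tmp; apply: powln0; lra.
  rewrite -[X in _ --> X](mulr0 ((q+1)^-1)).
  apply: cvgMl_tmp.
  rewrite -[X in _ --> X](mulr0 ((q+1)^-1)).
  by apply: cvgMl_tmp; apply: powR_cvg0; lra.
- right => t /andP[t0 tb].
  by rewrite mulr_ge0_le0 ?powR_ge0 // ln_le0 // (le_trans tb b1).
Qed.

Lemma int_inv_infty (K : R) : 0 < K ->
  (\int[mu]_(t in `[0%R, 1%R]) (K * t `^ (-1))%:E = +oo)%E.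
Proof.
move=> K0; apply: eq_infty => M.
set d := expR (- ((`|M| + 1) / K)).
have d0 : 0 < d by exact: expR_gt0.
have d1 : d < 1.
  rewrite /d expR_lt1 oppr_lt0; apply: divr_gt0 => //.
have F : (\int[mu]_(t in `[d, 1%R]) (K * t `^ (-1))%:E =
          (K * ln 1 - K * ln d)%:E)%E.
  have cf (t : R) : 0 < t -> {for t, continuous (fun t : R => K * t `^ (-1))}.
    move=> t0; apply: der_cont; apply: is_derive_eq.
      exact: (is_deriveZ K (is_derive1_powR (-1) t0)).
    by [].
  have dF (t : R) : 0 < t -> is_derive t 1 (fun t : R => K * ln t) (K * t `^ (-1)).
    move=> t0; apply: is_derive_eq.
      exact: (is_deriveZ K (is_derive1_ln t0)).
    by rewrite /GRing.scale /= powR_inv1 // ltW.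
  exact: (@FTCp R _ _ d 1 d0 d1 cf dF).
apply: (@le_trans _ _ (\int[mu]_(t in `[d, 1%R]) (K * t `^ (-1))%:E)%E).
  rewrite F lee_fin ln1 mulr0 sub0r /d expRK mulrN opprK mulrC divfK ?gt_eqF //.
  by rewrite (le_trans (ler_norm M)) // lerDl.
apply: ge0_subset_integral => //.
- apply/measurable_EFinP; apply: measurable_funM => //.
  exact: measurable_funTS (measurable_powR _).
- by move=> t _; rewrite lee_fin mulr_ge0 ?powR_ge0 // ltW.
- by apply: subset_itvr; rewrite bnd_simp ltW.
Qed.

End S2.

Section S3.
Context {R : realType}.
Notation mu := (@lebesgue_measure R).

Lemma int_lin (D : set R) (f g : R -> R) (al be F G : R) : measurable D ->
  measurable_fun D f -> measurable_fun D g ->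
  (forall t, D t -> 0 <= f t) -> (forall t, D t -> g t <= 0) ->
  (\int[mu]_(t in D) (f t)%:E = F%:E)%E -> (\int[mu]_(t in D) (g t)%:E = G%:E)%E ->
  (\int[mu]_(t in D) (al * f t + be * g t)%:E = (al * F + be * G)%:E)%E.
Proof.
move=> mD mf mg f0 g0 iF iG.
have intf : mu.-integrable D (fun t => (f t)%:E).
  apply/integrableP; split; first exact/measurable_EFinP.
  have -> : (\int[mu]_(x in D) `|(f x)%:E| = \int[mu]_(x in D) (f x)%:E)%E.
    by apply: eq_integral => t; rewrite inE => Dt /=; rewrite ger0_norm // f0.
  by rewrite iF ltry.
have intg : mu.-integrable D (fun t => (g t)%:E).
  apply/integrableP; split; first exact/measurable_EFinP.
  have -> : (\int[mu]_(x in D) `|(g x)%:E| = \int[mu]_(x in D) (- g x)%:E)%E.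
    by apply: eq_integral => t; rewrite inE => Dt /=; rewrite ler0_norm // g0.
  have : (\int[mu]_(t in D) - ((- g t)%:E) = - \int[mu]_(t in D) (- g t)%:E)%E.
    by apply: integral_ge0N => t Dt; rewrite lee_fin oppr_ge0 g0.
  under eq_integral do rewrite -EFinN opprK.
  rewrite iG => h.
  have -> : (\int[mu]_(t in D) (- g t)%:E = (- G)%:E)%E.
    by rewrite EFinN h oppeK.
  exact: ltry.
have -> : (\int[mu]_(x in D) (al * f x + be * g x)%:E =
   \int[mu]_(x in D) ((al%:E * (f x)%:E) + (be%:E * (g x)%:E)))%E.
  by apply: eq_integral => t _; rewrite EFinD !EFinM.
rewrite integralD //; [|exact: integrableZl|exact: integrableZl].
by rewrite !integralZl // iF iG -!EFinM -EFinD.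
Qed.

End S3.

Section S4.
Context {R : realType}.

Lemma key_ineq (s a b : R) : 0 < s -> s < 1 -> 0 <= a -> a < b ->
  ln ((b - a) / (b `^ s - a `^ s)) +
  (s - 1) * ((b `^ s * ln b - a `^ s * ln a) / (b `^ s - a `^ s)) <= 0.
Proof.
move=> s0 s1 a0 ab.
have b0 : 0 < b by exact: le_lt_trans a0 ab.
set B := b `^ s; set al := a `^ s.
have al0 : 0 <= al by exact: powR_ge0.
have Bal : al < B by apply: gt0_ltr_powR => //; rewrite nnegrE // ltW.
set d := B - al.
have d0 : 0 < d by rewrite /d subr_gt0.
set E := b `^ (s - 1).
have E0 : 0 < E by exact: powR_gt0.
have hE : b * E = B.
  rewrite /E /B -{1}(powRr1 (ltW b0)) -powRD; last by rewrite (gt_eqF b0) implybT.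
  by congr (_ `^ _); ring.
set lb := ln b; set la := ln a.
have key : al + (s - 1) * al * (lb - la) <= a * E.
  have [a00|a00] : a = 0 \/ 0 < a.
    by move: a0; rewrite le_eqVlt => /predU1P[->|]; [left|right].
    by rewrite /al /la a00 powR0 ?gt_eqF // mulr0 !mul0r add0r.
  have hae : a * E = al * expR ((s - 1) * (lb - la)).
    rewrite /E /al /powR (gt_eqF a00) (gt_eqF b0) -[in LHS](lnK a00) -!expRD.
    by congr expR; rewrite /lb /la; ring.
  rewrite hae; have := expR_ge1Dx ((s - 1) * (lb - la)); nra.
set Z := (b - a) * E / d.
have Z0 : 0 < Z by rewrite /Z divr_gt0 // mulr_gt0 // subr_gt0.
have lnZ : ln Z <= Z - 1.
  have h : ln (1 + (Z - 1)) <= Z - 1 by apply: le_ln1Dx; lra.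
  by rewrite (_ : 1 + (Z - 1) = Z) in h; [|ring].
have -> : (b - a) / d = Z / E by rewrite /Z; field; rewrite !gt_eqF.
rewrite ln_div ?posrE // /E ln_powR -/lb.
have num : (b - a) * E - d - (s - 1) * lb * d + (s - 1) * (B * lb - al * la) =
    al + (s - 1) * al * (lb - la) - a * E.
  by rewrite /d -hE; ring.
apply: (@le_trans _ _ ((Z - 1) - (s - 1) * lb + (s - 1) * ((B * lb - al * la) / d))).
  lra.
have -> : (Z - 1) - (s - 1) * lb + (s - 1) * ((B * lb - al * la) / d) =
   ((b - a) * E - d - (s - 1) * lb * d + (s - 1) * (B * lb - al * la)) / d.
  by rewrite /Z; field; rewrite gt_eqF.
rewrite num pmulr_lle0 ?invr_gt0 //; lra.
Qed.

Lemma gamma_gt1 (Q g : R) : 0 < Q -> 0 < g -> g - ln g = Q + 1 ->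
  (forall h : R, 0 < h -> h - ln h = Q + 1 -> h <= g) -> 1 < g.
Proof.
move=> Q0 g0 hg hl.
pose M := 2 * (Q + 1).
have M1 : 1 <= M by rewrite /M; lra.
have lnM : ln M <= Q + 1.
  rewrite /M lnM ?posrE //; last lra.
  have h2 : ln (1 + 1) <= 1 :> R by apply: le_ln1Dx; lra.
  have hQ : ln (1 + Q) <= Q by apply: le_ln1Dx; lra.
  rewrite [Q + 1]addrC. lra.
have [c c1M hc] : exists2 c, c \in `[1, M] & (fun u => u - ln u) c = Q + 1.
  apply: IVT => //.
    apply: continuous_in_subspaceT => u; rewrite inE /= in_itv /= => /andP[u1 _].
    apply: continuousB; first exact: cvg_id.
    by apply: continuous_ln; lra.
  rewrite /= ln1 subr0 ge_min le_max; apply/andP; split.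
    by apply/orP; left; lra.
  by apply/orP; right; rewrite /M; lra.
move: c1M; rewrite in_itv /= => /andP[c1 _].
have c0 : 0 < c by lra.
have cg := hl c c0 hc.
have cn1 : c != 1.
  by apply/eqP => c1'; move: hc; rewrite /= c1' ln1 subr0; lra.
have : 1 < c by rewrite lt_neqAle eq_sym cn1.
lra.
Qed.

Lemma vunique (g x v : R) : 1 < g -> 0 < x -> 0 < v ->
  (ln v + g) * x - v * g = (ln (x / g) + g) * x - (x / g) * g ->
  x <= g * v -> v = x / g.
Proof.
move=> g1 x0 v0 heq xv.
have g0 : 0 < g by lra.
set y := g * v / x.
have y0 : 0 < y by rewrite /y divr_gt0 // mulr_gt0.
have vy : v = x / g * y by rewrite /y; field; rewrite !gt_eqF.
have lnv : ln v = ln (x / g) + ln y.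
  by rewrite vy lnM // posrE divr_gt0.
have hy : ln y = y - 1.
  have : x * ln y = x * (y - 1).
    move: heq; rewrite lnv.
    have -> : x / g * g = x by field; rewrite gt_eqF.
    rewrite vy => h.
    have -> : x * (y - 1) = x / g * y * g - x by field; rewrite gt_eqF.
    lra.
  by move/mulfI; apply; rewrite gt_eqF.
have [ly0|ly0] := eqVneq (ln y) 0.
  have : y = 1 by rewrite -(lnK y0) ly0 expR0.
  by move=> y1; rewrite vy y1 mulr1.
have := expR_gt1Dx ly0; rewrite lnK //; lra.
Qed.

End S4.

Section S5.
Context {R : realType}.
Notation mu := (@lebesgue_measure R).

Lemma int_lin1 (D : set R) (f : R -> R) (al F : R) : measurable D ->
  measurable_fun D f -> (forall t, D t -> 0 <= f t) ->
  (\int[mu]_(t in D) (f t)%:E = F%:E)%E ->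
  (\int[mu]_(t in D) (al * f t)%:E = (al * F)%:E)%E.
Proof.
move=> mD mf f0 iF.
have := @int_lin R D f (fun=> 0) al 0 F 0 mD mf (measurable_cst _) f0
  (fun _ _ => lexx 0) iF.
rewrite mulr0 addr0 => h.
have h0 : (\int[mu]_(_ in D) (0:R)%:E)%E = 0%:E by exact: integral0.
rewrite -(h h0); apply: eq_integral => t _; by rewrite addr0.
Qed.

Lemma mpow (D : set R) (p : R) : measurable_fun D (fun t : R => t `^ p).
Proof. exact: measurable_funTS (measurable_powR _). Qed.

Lemma mpowln (D : set R) (p : R) : measurable_fun D (fun t : R => t `^ p * ln t).
Proof.
apply: measurable_funM; first exact: mpow.
exact: measurable_funTS (@measurable_ln R).
Qed.

Lemma int_kpow (k p a b : R) : -1 < p -> 0 <= a -> a < b ->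
  (\int[mu]_(t in `[a, b]) (k * t `^ p)%:E =
     (k * ((b `^ (p + 1) - a `^ (p + 1)) / (p + 1)))%:E)%E.
Proof.
move=> p1 a0 ab; apply: int_lin1 => //; first exact: mpow.
  by move=> t _; exact: powR_ge0.
exact: int_pow.
Qed.

Lemma int_wlog (k p a b : R) : 0 < k -> -1 < p -> p != 0 -> 0 <= a -> a < b -> b <= 1 ->
  (\int[mu]_(t in `[a, b]) ((k * t `^ p) * ln (k * t `^ p))%:E =
     (k * ln k * ((b `^ (p + 1) - a `^ (p + 1)) / (p + 1)) +
      k * p * (Gpl (p + 1) b - Gpl (p + 1) a))%:E)%E.
Proof.
move=> k0 p1 pn0 a0 ab b1.
rewrite -(@int_lin R `[a, b] (fun t => t `^ p) (fun t => t `^ p * ln t)) //.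
- apply: eq_integral => t; rewrite inE /= in_itv /= => /andP[hat _].
  have t0 : 0 <= t by exact: le_trans a0 hat.
  move: t0; rewrite le_eqVlt => /predU1P[<-|t0].
    by rewrite powR0 // !(mulr0, mul0r, addr0).
  rewrite lnM ?posrE ?powR_gt0 // ln_powR; congr EFin; ring.
- exact: mpow.
- exact: mpowln.
- by move=> t _; exact: powR_ge0.
- move=> t; rewrite /= in_itv /= => /andP[hat tb].
  by rewrite mulr_ge0_le0 ?powR_ge0 // ln_le0 // (le_trans tb b1).
- exact: int_pow.
- exact: int_powln.
Qed.

Lemma int_wpow (k p e : R) : 0 <= k -> -1 < p * e ->
  (\int[mu]_(t in `[0%R, 1%R]) ((k * t `^ p) `^ e)%:E =
     (k `^ e * ((1 `^ (p * e + 1) - 0 `^ (p * e + 1)) / (p * e + 1)))%:E)%E.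
Proof.
move=> k0 pe1.
rewrite -int_kpow //.
apply: eq_integral => t; rewrite inE /= in_itv /= => /andP[t0 _].
by rewrite powRM ?powR_ge0 // -powRrM.
Qed.

End S5.

Theorem lemma7 (R : realType) (Q gamma x : R) (hQ : 0 < Q)
  (hgpos : 0 < gamma) (hroot : gamma - ln gamma = Q + 1)
  (hlarger : forall g : R, 0 < g -> g - ln g = Q + 1 -> g <= gamma)
  (hx : 0 < x) :
  (RH1_const01 (w_ex x gamma) <= Q%:E)%E /\
  (forall eps : R, 0 < eps -> eps < (gamma - 1)^-1 ->
     exists X Y : R,
       avg 0 1 (w_ex x gamma) = X%:E /\
       avg 0 1 (fun t => w_ex x gamma t * ln (w_ex x gamma t)) = Y%:E /\
       (exists v : R, vcond gamma X Y v) /\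
       (forall v : R, vcond gamma X Y v ->
          avg 0 1 (fun t => w_ex x gamma t `^ (1 + eps)) = (Bfun gamma eps X v)%:E)) /\
  avg 0 1 (fun t => w_ex x gamma t `^ (1 + (gamma - 1)^-1)) = +oo%E.
Proof.
have g1 : 1 < gamma := @gamma_gt1 R Q gamma hQ hgpos hroot hlarger.
have gn0 : gamma != 0 by rewrite gt_eqF.
set s := gamma^-1.
set p := (1 - gamma) / gamma.
have ps : p + 1 = s by rewrite /p /s; field.
have s0 : 0 < s by rewrite /s invr_gt0.
have s1 : s < 1 by rewrite /s invf_lt1.
have p1 : -1 < p by lra.
have pn0 : p != 0 by apply/eqP => p0; lra.
have sn0 : s != 0 by rewrite gt_eqF.
have gs : gamma * s = 1 by rewrite /s mulfV.
set c0 := x / gamma.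
have c00 : 0 < c0 by rewrite /c0 divr_gt0.
have c0s : c0 / s = x by rewrite /c0 /s; field.
have ps2 : p / s = 1 - gamma by rewrite /p /s; field.
have hQv : Q = gamma - 1 - ln gamma by lra.
have lns : ln s = - ln gamma by rewrite /s lnV ?posrE.
split.
  rewrite /RH1_const01; apply: ge_ereal_sup => _ [a [b [a0 ab b1 ->]]].
  set B := b `^ s; set al := a `^ s.
  have Bal : al < B.
    by apply: gt0_ltr_powR => //; rewrite nnegrE // (le_trans a0 (ltW ab)).
  have ba : 0 < b - a by rewrite subr_gt0.
  set A := (b - a)^-1 * (c0 * ((B - al) / s)).
  have A0 : 0 < A by rewrite /A mulr_gt0 ?invr_gt0 // mulr_gt0 // divr_gt0 // subr_gt0.
  have hA : avg a b (w_ex x gamma) = A%:E.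
    by rewrite /avg /w_ex -/c0 -/p int_kpow // ps.
  rewrite hA /=.
  have hw t : w_ex x gamma t / A = c0 / A * t `^ p by rewrite /w_ex -/c0 -/p mulrAC.
  rewrite /avg; under eq_integral do rewrite hw.
  rewrite int_wlog ?divr_gt0 // ps -EFinM lee_fin.
  set k := c0 / A.
  have hk : k = s * ((b - a) / (B - al)).
    by rewrite /k /A; field; rewrite !gt_eqF // subr_gt0.
  have hk0 : 0 < (b - a) / (B - al) by rewrite divr_gt0 // subr_gt0.
  have -> : (b - a)^-1 * (k * ln k * ((B - al) / s) + k * p * (Gpl s b - Gpl s a)) =
     ln k + p * ((B * ln b - al * ln a) / (B - al)) - p / s.
    by rewrite /Gpl hk -/B -/al; field; rewrite !gt_eqF // subr_gt0.
  rewrite hk lnM ?posrE // lns ps2.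
  have := @key_ineq R s a b s0 s1 a0 ab.
  rewrite -/B -/al (_ : p = s - 1); last by rewrite -ps; ring.
  lra.
split.
  move=> eps e0 e1.
  have ge1 : eps * (gamma - 1) < 1.
    have gm : 0 < gamma - 1 by rewrite subr_gt0.
    by move: e1; rewrite -[X in _ < X]mul1r ltr_pdivlMr.
  have avg01 (f : R -> R) : avg 0 1 f = (\int[lebesgue_measure]_(t in `[0%R, 1%R]) (f t)%:E)%E.
    by rewrite /avg subr0 invr1 mul1e.
  have s1' : 1 `^ s = 1 by rewrite powR1.
  have s0' : 0 `^ s = 0 by rewrite powR0.
  exists x, ((ln (x / gamma) + gamma) * x - x / gamma * gamma).
  split.
    by rewrite avg01 /w_ex -/c0 -/p int_kpow // ps s1' s0' subr0 mul1r c0s.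
  split.
    rewrite avg01 /w_ex -/c0 -/p int_wlog // ps s1' s0' subr0.
    congr EFin; rewrite /Gpl s1' s0' ln1 /c0 /p /s; field; exact: gn0.
  split.
    exists (x / gamma); split; first by rewrite divr_gt0.
    split; first by [].
    split; last by rewrite mulrC divfK.
    by rewrite ler_pdivrMr // ler_peMr // ltW.
  move=> v [v0 [heq [_ xv]]].
  have -> : v = x / gamma by apply: vunique.
  have hr : 0 < p * (1 + eps) + 1.
    rewrite /p; have -> : (1 - gamma) / gamma * (1 + eps) + 1 =
      (1 + eps - gamma * eps) / gamma by field.
    by rewrite divr_gt0 //; lra.
  rewrite avg01 /w_ex -/c0 -/p int_wpow ?ltW //; last lra.
  rewrite powR1 powR0 ?gt_eqF // subr0 mul1r.
  rewrite powRD; last by rewrite (gt_eqF c00) implybT.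
  rewrite powRr1 ?ltW //.
  move: hr; rewrite /Bfun -/c0 /c0 /p => hr.
  congr EFin; field.
  by rewrite gn0 /=; apply/eqP; lra.
have avg01 (f : R -> R) : avg 0 1 f = (\int[lebesgue_measure]_(t in `[0%R, 1%R]) (f t)%:E)%E.
  by rewrite /avg subr0 invr1 mul1e.
set e := 1 + (gamma - 1)^-1.
have pe : p * e = -1.
  rewrite /p /e; field; apply/andP; split => //; apply/eqP; lra.
rewrite avg01 -(@int_inv_infty R (c0 `^ e)); last exact: powR_gt0.
apply: eq_integral => t; rewrite inE /= in_itv /= => /andP[t0 _].
by rewrite /w_ex -/c0 -/p powRM ?powR_ge0 ?ltW // -powRrM pe.
Qed.
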